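(* Let $n\geq1$ and let $X$ be an indecomposable object of $\overline{\mathcal{C}}_n$. Then $X$ is homologically connected.
   Context: Let $k$ be a field, $S$ the unit circle with anticlockwise orientation. Fix a discrete infinite subset $\mathscr{M}\subset S$ such that every limit point of $\mathscr{M}$ is a limit of both an increasing and a decreasing sequence of $\mathscr{M}$ in the cyclic order, with exactly $n$ such limit points (accumulation points); put $\overline{\mathscr{M}}=\mathscr{M}\cup L(\mathscr{M})$. Each $x\in\mathscr{M}$ has a cyclic predecessor $x^-$ and successor $x^+$ in $\mathscr{M}$; for accumulation points $a^\pm=a$. An arc of $\overline{\mathscr{M}}$ is an unordered pair $\{x_1,x_2\}\subset\overline{\mathscr{M}}$ with $x_2\ne x_1,x_1^-,x_1^+$; arcs cross if their endpoints strictly alternate cyclically; $\{x_1,x_2\}[1]=\{x_1^-,x_2^-\}$. The Paquette–Yıldırım category $\overline{\mathcal{C}}_n$ is a Hom-finite, $k$-linear, Krull–Schmidt triangulated category with suspension $[1]$ whose indecomposables $X$ correspond bijectively to arcs $\ell_X$ of $\overline{\mathscr{M}}$, with $\ell_{X[1]}=\ell_X[1]$, and $\mathrm{Hom}(X,Y)\cong k$ if $\ell_X$ and $\ell_Y[-1]$ cross, or both have an endpoint at a common accumulation point with $\ell_Y[-1]$ an anticlockwise rotation of $\ell_X$ about it; $0$ otherwise. For an object $G$, $\langle G\rangle_1$ is the full subcategory of direct summands of finite direct sums of suspensions $G[i]$. $G$ is homologically connected if for any two indecomposables $F,F'\in\langle G\rangle_1$ there is a finite sequence $F=F_1,\dots,F_{l+1}=F'$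 of indecomposables in $\langle G\rangle_1$ such that for each $i$ there is a nonzero element of $\mathrm{Ext}^1(F_i,F_{i+1})$ or of $\mathrm{Ext}^1(F_{i+1},F_i)$. *)

(* Defs.v *)
(* the circle S is parametrised by t in [0,1) via
   t |-> (cos 2 pi t, sin 2 pi t); anticlockwise = increasing t (mod 1). *)
From Stdlib Require Import Reals Lra ZArith List Relations ClassicalEpsilon.
Import ListNotations.
Open Scope R_scope.

Definition inS (t : R) : Prop := 0 <= t < 1.

Definition cyc (a b c : R) : Prop :=
  (a < b < c) \/ (b < c < a) \/ (c < a < b).

Definition ccw (m a : R) : R := if Rle_dec m a then a - m else a - m + 1.

Definition cdist (x y : R) : R := Rmin (ccw x y) (ccw y x).

Section Marked.
Variable M : R -> Prop.

Definition is_lim (a : R) : Prop :=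
  inS a /\ forall eps, 0 < eps -> exists m, M m /\ m <> a /\ cdist m a < eps.

(* a is the limit of an increasing (resp. decreasing) sequence of M in the
   cyclic order, i.e. points of M accumulate at a from the clockwise
   (resp. anticlockwise) side *)
Definition lim_from_below (a : R) : Prop :=
  forall eps, 0 < eps -> exists m, M m /\ 0 < ccw m a < eps.
Definition lim_from_above (a : R) : Prop :=
  forall eps, 0 < eps -> exists m, M m /\ 0 < ccw a m < eps.

Definition admissible (n : nat) : Prop :=
  (forall x, M x -> inS x) /\
  (forall x, M x -> exists eps, 0 < eps /\
        forall y, M y -> y <> x -> eps <= cdist x y) /\
  (forall l : list R, exists x, M x /\ ~ In x l) /\
  (forall a, is_lim a -> lim_from_below a /\ lim_from_above a) /\
  (exists L : list R, NoDup L /\ length L = n /\ forall a, In a L <-> is_lim a).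

Definition Mbar (x : R) : Prop := M x \/ is_lim x.

(* cyclic successor x^+ and predecessor x^- (identity off M) *)
Definition succ (x : R) : R :=
  match excluded_middle_informative (M x) with
  | left _ => epsilon (inhabits 0)
      (fun y => M y /\ y <> x /\ forall z, M z -> ~ cyc x z y)
  | right _ => x
  end.
Definition pred (x : R) : R :=
  match excluded_middle_informative (M x) with
  | left _ => epsilon (inhabits 0)
      (fun y => M y /\ y <> x /\ forall z, M z -> ~ cyc y z x)
  | right _ => x
  end.

(* arcs: unordered pairs, represented canonically as (x1, x2) with x1 < x2 *)
Definition arc := (R * R)%type.
Definition mk_arc (a b : R) : arc := if Rlt_dec a b then (a, b) else (b, a).

Definition is_arc (l : arc) : Prop :=
  let (x1, x2) := l in
  x1 < x2 /\ Mbar x1 /\ Mbar x2 /\ x2 <> x1 /\ x2 <> pred x1 /\ x2 <> succ x1.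

(* suspension {x1,x2}[1] = {x1^-, x2^-} and its inverse *)
Definition shift (l : arc) : arc := mk_arc (pred (fst l)) (pred (snd l)).
Definition unshift (l : arc) : arc := mk_arc (succ (fst l)) (succ (snd l)).

Definition shiftZ (i : Z) (l : arc) : arc :=
  match i with
  | Z0 => l
  | Zpos p => Nat.iter (Pos.to_nat p) shift l
  | Zneg p => Nat.iter (Pos.to_nat p) unshift l
  end.

Definition crosses (l l' : arc) : Prop :=
  let (x1, x2) := l in let (y1, y2) := l' in
  (cyc x1 y1 x2 /\ cyc x2 y2 x1) \/ (cyc x1 y2 x2 /\ cyc x2 y1 x1).

(* l and l' share an endpoint a which is an accumulation point, and l' is an
   anticlockwise rotation of l about a (the trivial rotation included) *)
Definition rotates (l l' : arc) : Prop :=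
  exists a x y, is_lim a /\ l = mk_arc a x /\ l' = mk_arc a y /\
    (y = x \/ cyc x y a).

(* Hom(X,Y) <> 0, in terms of the arcs l = l_X, m = l_Y *)
Definition hom_nz (l m : arc) : Prop :=
  crosses l (unshift m) \/ rotates l (unshift m).

(* Ext^1(X,Y) = Hom(X, Y[1]) <> 0 *)
Definition ext1_nz (l m : arc) : Prop := hom_nz l (shift m).

(* Objects of the Krull-Schmidt category: finite direct sums of
   indecomposables, i.e. finite lists of arcs. *)
Definition obj := list arc.
Definition obj_shift (i : Z) (G : obj) : obj := map (shiftZ i) G.

(* F is an indecomposable object of <G>_1: a direct summand of a finite direct
   sum of suspensions G[i] *)
Definition indec_in (G : obj) (F : arc) : Prop :=
  is_arc F /\ exists is : list Z, In F (concat (map (fun i => obj_shift i G) is)).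

Definition ext_step (G : obj) (F F' : arc) : Prop :=
  indec_in G F /\ indec_in G F' /\ (ext1_nz F F' \/ ext1_nz F' F).

Definition hom_connected (G : obj) : Prop :=
  forall F F', indec_in G F -> indec_in G F' ->
    clos_refl_trans_1n arc (ext_step G) F F'.

End Marked.

(* Main.v *)
From Stdlib Require Import ZArith.
Require Import Defs.
From Stdlib Require Import Reals Lra List Relations Classical ClassicalEpsilon.
Open Scope R_scope.

Ltac ccw_tac := unfold ccw, inS in *; repeat destruct Rle_dec; lra.

Lemma ccw_range u v : inS u -> inS v -> 0 <= ccw u v < 1.
Proof. intros. unfold ccw, inS in *; destruct Rle_dec; lra. Qed.
Lemma ccw_pos u v : inS u -> inS v -> u <> v -> 0 < ccw u v.
Proof. intros. unfold ccw, inS in *; destruct Rle_dec; [|lra].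
 destruct (Req_dec u v); [congruence| lra]. Qed.
Lemma ccw_zero u : ccw u u = 0.
Proof. unfold ccw; destruct Rle_dec; lra. Qed.
Lemma ccw_tri u v w : inS u -> inS v -> inS w ->
  ccw u v + ccw v w = ccw u w \/ ccw u v + ccw v w = ccw u w + 1.
Proof. intros. unfold ccw, inS in *; repeat destruct Rle_dec;
  first [left; lra | right; lra]. Qed.
Lemma cyc_ccw a b c : inS a -> inS b -> inS c -> cyc a b c -> 0 < ccw a b < ccw a c.
Proof. intros. unfold cyc, ccw, inS in *; repeat destruct Rle_dec; lra. Qed.
Lemma ccw_cyc a b c : inS a -> inS b -> inS c -> 0 < ccw a b < ccw a c -> cyc a b c.
Proof. intros. unfold cyc, ccw, inS in *; repeat destruct Rle_dec;
  first [left; lra | right; left; lra | right; right; lra | lra]. Qed.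
Lemma cyc_total a b c : a <> b -> b <> c -> a <> c -> cyc a b c \/ cyc a c b.
Proof. intros. unfold cyc.
 destruct (Rtotal_order a b) as [?|[?|?]]; [|congruence|];
 destruct (Rtotal_order b c) as [?|[?|?]]; try congruence;
 destruct (Rtotal_order a c) as [?|[?|?]]; try congruence;
 first [left; left; lra | left; right; left; lra | left; right; right; lra
       | right; left; lra | right; right; left; lra | right; right; right; lra | lra]. Qed.
Lemma cyc_trans p a x m : cyc p a x -> cyc a m x -> cyc p m x.
Proof. unfold cyc; intros; lra. Qed.
Lemma cyc_neq1 a b c : cyc a b c -> a <> b.
Proof. unfold cyc; intros; lra. Qed.
Lemma cyc_neq2 a b c : cyc a b c -> b <> c.
Proof. unfold cyc; intros; lra. Qed.
Lemma cyc_rot a b c : cyc a b c -> cyc b c a.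
Proof. unfold cyc; intros; lra. Qed.

Lemma lim_notM M n a : admissible M n -> is_lim M a -> ~ M a.
Proof.
 intros [_ [Hd _]] [_ Hl] Ha. destruct (Hd a Ha) as [e [He H]].
 destruct (Hl e He) as [m [Hm [Hma Hc]]].
 specialize (H m Hm Hma). unfold cdist in *.
 rewrite Rmin_comm in H. lra.
Qed.

Lemma inf_exists (M : R -> Prop) (f : R -> R) (m0 : R) :
  M m0 -> (forall m, M m -> 0 <= f m) ->
  exists d, (forall m, M m -> d <= f m) /\
    (forall del, 0 < del -> exists m, M m /\ f m < d + del).
Proof.
 intros H0 Hf.
 set (E := fun t => exists m, M m /\ t = - f m).
 assert (Hb : bound E). { exists 0. intros t [m [Hm ->]]. specialize (Hf m Hm). lra. }
 assert (Hn : exists t, E t). { exists (- f m0). exists m0; auto. }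
 destruct (completeness E Hb Hn) as [s [Hub Hl]].
 exists (- s). split.
 - intros m Hm. assert (E (- f m)) by (exists m; auto). specialize (Hub _ H). lra.
 - intros del Hdel. apply NNPP; intro Hno.
   assert (is_upper_bound E (s - del)).
   { intros t [m [Hm ->]]. destruct (Rlt_le_dec (f m) (-s + del)).
     + exfalso; apply Hno; exists m; auto.
     + lra. }
   specialize (Hl _ H). lra.
Qed.

Lemma pred_exists M n x : admissible M n -> M x ->
  exists y, M y /\ y <> x /\ forall z, M z -> ~ cyc y z x.
Proof.
 intros Hadm Hx. pose proof Hadm as [HS [Hd [Hinf [Hacc _]]]].
 destruct (Hd x Hx) as [eps [Heps Hdx]].
 destruct (Hinf (x :: nil)) as [m0 [Hm0 Hm0x]].
 assert (m0 <> x) by (intro; apply Hm0x; left; auto).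
 pose proof (HS x Hx) as Sx.
 destruct (inf_exists (fun m => M m /\ m <> x) (fun m => ccw m x) m0) as [d [Hlb Hgl]].
 { split; auto. } { intros m [Hm _]. apply ccw_range; auto. }
 assert (Hdeps : eps <= d).
 { destruct (Rle_lt_dec eps d); auto. destruct (Hgl (eps - d)) as [m [[Hm Hmx] Hlt]]; [lra|].
   specialize (Hdx m Hm Hmx). unfold cdist in Hdx. pose proof (Rmin_r (ccw x m) (ccw m x)). lra. }
 assert (Hd1 : d < 1).
 { pose proof (Hlb m0 (conj Hm0 H)). pose proof (ccw_range m0 x (HS _ Hm0) Sx). lra. }
 destruct (classic (exists m, M m /\ m <> x /\ ccw m x = d)) as [[m [Hm [Hmx Hmd]]] | Hno].
 - exists m. split; auto. split; auto. intros z Hz Hc.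
   pose proof (cyc_ccw _ _ _ (HS _ Hm) (HS _ Hz) Sx Hc).
   assert (z <> x) by (eapply cyc_neq2; eauto).
   pose proof (Hlb z (conj Hz H1)).
   destruct (ccw_tri m z x (HS _ Hm) (HS _ Hz) Sx);
   pose proof (ccw_range z x (HS _ Hz) Sx); lra.
 - exfalso.
   assert (exists a, inS a /\ ccw a x = d) as [a [Sa Hax]].
   { destruct (Rle_dec d x).
     + exists (x - d). unfold inS in *. split; [lra|]. unfold ccw; destruct Rle_dec; lra.
     + exists (x - d + 1). unfold inS in *. split; [lra|]. unfold ccw; destruct Rle_dec; lra. }
   assert (Hla : is_lim M a).
   { split; auto. intros e He.
     destruct (Hgl (Rmin e (1 - d))) as [m [[Hm Hmx] Hlt]].
     { apply Rmin_pos; lra. }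
     pose proof (Rmin_l e (1 - d)). pose proof (Rmin_r e (1 - d)).
     pose proof (Hlb m (conj Hm Hmx)).
     assert (ccw m x <> d) by (intro; apply Hno; exists m; auto).
     pose proof (HS _ Hm) as Sm.
     pose proof (ccw_range m a Sm Sa). pose proof (ccw_range a x Sa Sx).
     destruct (ccw_tri m a x Sm Sa Sx) as [Ht|Ht]; [|lra].
     exists m. split; auto. split.
     + intro; subst. rewrite ccw_zero in Ht. lra.
     + unfold cdist. pose proof (Rmin_l (ccw m a) (ccw a m)). lra. }
   destruct (Hacc a Hla) as [_ Hab].
   destruct (Hab d) as [m [Hm Hr]]; [lra|].
   pose proof (HS _ Hm) as Sm.
   assert (Hmx : m <> x) by (intro; subst; lra).
   pose proof (Hlb m (conj Hm Hmx)).
   pose proof (ccw_range m x Sm Sx). destruct (ccw_tri a m x Sa Sm Sx) as [Ht|Ht]; lra.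
Qed.

Lemma succ_exists M n x : admissible M n -> M x ->
  exists y, M y /\ y <> x /\ forall z, M z -> ~ cyc x z y.
Proof.
 intros Hadm Hx. pose proof Hadm as [HS [Hd [Hinf [Hacc _]]]].
 destruct (Hd x Hx) as [eps [Heps Hdx]].
 destruct (Hinf (x :: nil)) as [m0 [Hm0 Hm0x]].
 assert (m0 <> x) by (intro; apply Hm0x; left; auto).
 pose proof (HS x Hx) as Sx.
 destruct (inf_exists (fun m => M m /\ m <> x) (fun m => ccw x m) m0) as [d [Hlb Hgl]].
 { split; auto. } { intros m [Hm _]. apply ccw_range; auto. }
 assert (Hdeps : eps <= d).
 { destruct (Rle_lt_dec eps d); auto. destruct (Hgl (eps - d)) as [m [[Hm Hmx] Hlt]]; [lra|].
   specialize (Hdx m Hm Hmx). unfold cdist in Hdx. pose proof (Rmin_l (ccw x m) (ccw m x)). lra. }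
 assert (Hd1 : d < 1).
 { pose proof (Hlb m0 (conj Hm0 H)). pose proof (ccw_range x m0 Sx (HS _ Hm0)). lra. }
 destruct (classic (exists m, M m /\ m <> x /\ ccw x m = d)) as [[m [Hm [Hmx Hmd]]] | Hno].
 - exists m. split; auto. split; auto. intros z Hz Hc.
   pose proof (cyc_ccw _ _ _ Sx (HS _ Hz) (HS _ Hm) Hc).
   assert (z <> x) by (intro; subst; eapply cyc_neq1; eauto).
   pose proof (Hlb z (conj Hz H1)). lra.
 - exfalso.
   assert (exists a, inS a /\ ccw x a = d) as [a [Sa Hax]].
   { destruct (Rle_dec (x + d) 1).
     + destruct (Req_dec (x + d) 1).
       * exists 0. unfold inS in *. split; [lra|]. unfold ccw; destruct Rle_dec; lra.
       * exists (x + d). unfold inS in *. split; [lra|]. unfold ccw; destruct Rle_dec; lra.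
     + exists (x + d - 1). unfold inS in *. split; [lra|]. unfold ccw; destruct Rle_dec; lra. }
   assert (Hla : is_lim M a).
   { split; auto. intros e He.
     destruct (Hgl (Rmin e (1 - d))) as [m [[Hm Hmx] Hlt]].
     { apply Rmin_pos; lra. }
     pose proof (Rmin_l e (1 - d)). pose proof (Rmin_r e (1 - d)).
     pose proof (Hlb m (conj Hm Hmx)).
     assert (ccw x m <> d) by (intro; apply Hno; exists m; auto).
     pose proof (HS _ Hm) as Sm.
     pose proof (ccw_range a m Sa Sm). pose proof (ccw_range x a Sx Sa).
     destruct (ccw_tri x a m Sx Sa Sm) as [Ht|Ht]; [|lra].
     exists m. split; auto. split.
     + intro; subst. rewrite ccw_zero in Ht. lra.
     + unfold cdist. pose proof (Rmin_r (ccw m a) (ccw a m)). lra. }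
   destruct (Hacc a Hla) as [Hab _].
   destruct (Hab d) as [m [Hm Hr]]; [lra|].
   pose proof (HS _ Hm) as Sm.
   assert (Hmx : m <> x) by (intro; subst; lra).
   pose proof (Hlb m (conj Hm Hmx)).
   pose proof (ccw_range x m Sx Sm). destruct (ccw_tri x m a Sx Sm Sa) as [Ht|Ht]; lra.
Qed.

Lemma pred_spec M n x : admissible M n -> M x ->
  M (pred M x) /\ pred M x <> x /\ forall z, M z -> ~ cyc (pred M x) z x.
Proof.
 intros Ha Hx. unfold pred. destruct excluded_middle_informative as [h|h]; [|contradiction].
 apply (epsilon_spec (inhabits 0) (fun y => M y /\ y <> x /\ forall z, M z -> ~ cyc y z x)).
 eapply pred_exists; eauto.
Qed.
Lemma succ_spec M n x : admissible M n -> M x ->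
  M (succ M x) /\ succ M x <> x /\ forall z, M z -> ~ cyc x z (succ M x).
Proof.
 intros Ha Hx. unfold succ. destruct excluded_middle_informative as [h|h]; [|contradiction].
 apply (epsilon_spec (inhabits 0) (fun y => M y /\ y <> x /\ forall z, M z -> ~ cyc x z y)).
 eapply succ_exists; eauto.
Qed.
Lemma pred_nM M x : ~ M x -> pred M x = x.
Proof. intros h. unfold pred. destruct excluded_middle_informative; tauto. Qed.
Lemma succ_nM M x : ~ M x -> succ M x = x.
Proof. intros h. unfold succ. destruct excluded_middle_informative; tauto. Qed.

Lemma succ_pred M n x : admissible M n -> succ M (pred M x) = x.
Proof.
 intros Ha. destruct (classic (M x)) as [Hx|Hx]; [| rewrite !pred_nM, succ_nM; auto; rewrite pred_nM; auto].
 destruct (pred_spec M n x Ha Hx) as [Hp [Hpx Hpz]].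
 destruct (succ_spec M n _ Ha Hp) as [Hs [Hsp Hsz]].
 destruct (classic (succ M (pred M x) = x)) as [e|ne]; auto. exfalso.
 destruct (cyc_total (pred M x) (succ M (pred M x)) x) as [c|c]; auto.
 - apply (Hpz _ Hs c).
 - apply (Hsz _ Hx c).
Qed.
Lemma pred_succ M n x : admissible M n -> pred M (succ M x) = x.
Proof.
 intros Ha. destruct (classic (M x)) as [Hx|Hx]; [| rewrite !succ_nM, pred_nM; auto; rewrite succ_nM; auto].
 destruct (succ_spec M n x Ha Hx) as [Hp [Hpx Hpz]].
 destruct (pred_spec M n _ Ha Hp) as [Hs [Hsp Hsz]].
 destruct (classic (pred M (succ M x) = x)) as [e|ne]; auto. exfalso.
 destruct (cyc_total x (pred M (succ M x)) (succ M x)) as [c|c]; auto.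
 - apply (Hpz _ Hs c).
 - apply (Hsz _ Hx (cyc_rot _ _ _ (cyc_rot _ _ _ c))).
Qed.

Lemma Mbar_pred M n x : admissible M n -> Mbar M x -> Mbar M (pred M x).
Proof. intros Ha [h|h]. - left; apply (pred_spec M n x Ha h). - rewrite pred_nM; [right; auto|].
 eapply lim_notM; eauto. Qed.
Lemma Mbar_succ M n x : admissible M n -> Mbar M x -> Mbar M (succ M x).
Proof. intros Ha [h|h]. - left; apply (succ_spec M n x Ha h). - rewrite succ_nM; [right; auto|].
 eapply lim_notM; eauto. Qed.

Lemma mk_arc_comm a b : a <> b -> mk_arc a b = mk_arc b a.
Proof. intros. unfold mk_arc. repeat destruct Rlt_dec; f_equal; lra. Qed.

Lemma is_arc_mk M n a b : admissible M n -> Mbar M a -> Mbar M b -> a <> b ->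
  b <> pred M a -> b <> succ M a -> is_arc M (mk_arc a b).
Proof.
 intros Ha Hma Hmb Hab H1 H2. unfold mk_arc. destruct Rlt_dec.
 - simpl. repeat split; auto.
 - simpl. assert (b < a) by (destruct (Rtotal_order a b) as [?|[?|?]]; auto; [contradiction|congruence]).
   repeat split; auto.
   + intro e. apply H2. rewrite e. rewrite succ_pred with (n:=n); auto.
   + intro e. apply H1. rewrite e. rewrite pred_succ with (n:=n); auto.
Qed.

Lemma shift_arc M n F : admissible M n -> is_arc M F -> is_arc M (shift M F).
Proof.
 intros Ha. destruct F as [x1 x2]. intros (Hlt & H1 & H2 & H3 & H4 & H5).
 unfold shift; simpl. apply is_arc_mk with (n:=n); [exact Ha|eapply Mbar_pred; eauto|eapply Mbar_pred; eauto| | | ].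
 - intro e. apply H3. rewrite <- (succ_pred M n x1), <- (succ_pred M n x2); auto. congruence.
 - intro e. apply H4. rewrite <- (succ_pred M n x2); auto. rewrite e, succ_pred with (n:=n); auto.
 - intro e. apply H5. rewrite succ_pred with (n:=n) in e; auto.
   rewrite <- e, succ_pred with (n:=n); auto.
Qed.

Lemma unshift_arc M n F : admissible M n -> is_arc M F -> is_arc M (unshift M F).
Proof.
 intros Ha. destruct F as [x1 x2]. intros (Hlt & H1 & H2 & H3 & H4 & H5).
 unfold unshift; simpl. apply is_arc_mk with (n:=n); [exact Ha|eapply Mbar_succ; eauto|eapply Mbar_succ; eauto| | | ].
 - intro e. apply H3. rewrite <- (pred_succ M n x1), <- (pred_succ M n x2); auto. congruence.
 - intro e. apply H4. rewrite pred_succ with (n:=n) in e; auto.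
   rewrite <- e, pred_succ with (n:=n); auto.
 - intro e. apply H5. rewrite <- (pred_succ M n x2); auto. rewrite e, pred_succ with (n:=n); auto.
Qed.

Lemma unshift_shift M n F : admissible M n -> is_arc M F -> unshift M (shift M F) = F.
Proof.
 intros Ha. destruct F as [x1 x2]. intros (Hlt & _).
 unfold shift, unshift, mk_arc; simpl.
 destruct (Rlt_dec (pred M x1) (pred M x2)); simpl; rewrite !succ_pred with (n:=n); auto;
 destruct Rlt_dec; auto; lra.
Qed.
Lemma shift_unshift M n F : admissible M n -> is_arc M F -> shift M (unshift M F) = F.
Proof.
 intros Ha. destruct F as [x1 x2]. intros (Hlt & _).
 unfold shift, unshift, mk_arc; simpl.
 destruct (Rlt_dec (succ M x1) (succ M x2)); simpl; rewrite !pred_succ with (n:=n); auto;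
 destruct Rlt_dec; auto; lra.
Qed.

Lemma rot_lemma M n p x a : admissible M n -> M x -> is_lim M a -> x <> a ->
  p = pred M x -> cyc p x a.
Proof.
 intros Ha Hx Hla Hxa ->. pose proof Ha as [HS [_ [_ [Hacc _]]]].
 destruct (pred_spec M n x Ha Hx) as [Hp [Hpx Hpz]].
 assert (~ M a) by (eapply lim_notM; eauto).
 assert (pred M x <> a) by (intro e; rewrite <- e in H; auto).
 destruct (cyc_total (pred M x) x a) as [c|c]; auto. exfalso.
 destruct (Hacc a Hla) as [_ Hab].
 pose proof (proj1 Hla) as Sa. pose proof (HS x Hx) as Sx.
 destruct (Hab (ccw a x)) as [m [Hm Hr]]. { apply ccw_pos; auto. }
 assert (cyc a m x) by (apply ccw_cyc; auto; lra).
 apply (Hpz m Hm). eapply cyc_trans; eauto.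
Qed.

Lemma step_lemma M n F : admissible M n -> is_arc M F ->
  shift M F = F \/ ext1_nz M (shift M F) F.
Proof.
 intros Ha HF. unfold ext1_nz, hom_nz. rewrite unshift_shift with (n:=n); auto.
 destruct F as [x1 x2]. destruct HF as (Hlt & H1 & H2 & H3 & H4 & H5).
 destruct (classic (M x1)) as [m1|m1]; destruct (classic (M x2)) as [m2|m2].
 - right. left.
   destruct (pred_spec M n x1 Ha m1) as [Hp1 [Hp1x Hp1z]].
   destruct (pred_spec M n x2 Ha m2) as [Hp2 [Hp2x Hp2z]].
   assert (Hne : pred M x1 <> pred M x2).
   { intro e. apply H3. rewrite <- (succ_pred M n x1), <- (succ_pred M n x2); auto. congruence. }
   assert (Hx1p2 : x1 <> pred M x2).
   { intro e. apply H5. rewrite e, succ_pred with (n:=n); auto. }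
   assert (c1 : cyc (pred M x1) x1 (pred M x2)).
   { destruct (cyc_total (pred M x1) x1 (pred M x2)) as [c|c]; auto. exfalso. apply (Hp1z _ Hp2 c). }
   assert (c2 : cyc (pred M x2) x2 (pred M x1)).
   { destruct (cyc_total (pred M x2) x2 (pred M x1)) as [c|c]; auto. exfalso. apply (Hp2z _ Hp1 c). }
   unfold shift, mk_arc; simpl. destruct Rlt_dec; simpl; [left|right]; split; auto.
 - right. right. assert (Hl2 : is_lim M x2) by (destruct H2; tauto).
   exists x2, (pred M x1), x1. split; auto. split; [|split].
   + unfold shift; simpl. rewrite (pred_nM M x2 m2). apply mk_arc_comm.
     intro e. apply m2. rewrite <- e. exact (proj1 (pred_spec M n x1 Ha m1)).
   + unfold mk_arc. destruct Rlt_dec; auto; lra.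
   + right. apply (rot_lemma M n _ x1); auto; intro; subst; lra.
 - right. right. assert (Hl1 : is_lim M x1) by (destruct H1; tauto).
   exists x1, (pred M x2), x2. split; auto. split; [|split].
   + unfold shift; simpl. rewrite (pred_nM M x1 m1). auto.
   + unfold mk_arc. destruct Rlt_dec; auto; lra.
   + right. apply (rot_lemma M n _ x2); auto; intro; subst; lra.
 - left. unfold shift; simpl. rewrite (pred_nM M x1 m1), (pred_nM M x2 m2).
   unfold mk_arc. destruct Rlt_dec; auto; lra.
Qed.

Lemma iter_shift_arc M n X k : admissible M n -> is_arc M X -> is_arc M (Nat.iter k (shift M) X).
Proof. intros Ha HX; induction k; simpl; auto. apply shift_arc with (n:=n); auto. Qed.
Lemma iter_unshift_arc M n X k : admissible M n -> is_arc M X -> is_arc M (Nat.iter k (unshift M) X).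
Proof. intros Ha HX; induction k; simpl; auto. apply unshift_arc with (n:=n); auto. Qed.

Lemma indec_shift M n X k : admissible M n -> is_arc M X -> indec_in M (X :: nil) (Nat.iter k (shift M) X).
Proof.
 intros Ha HX. split. { apply iter_shift_arc with (n:=n); auto. }
 exists (Z.of_nat k :: nil). simpl. left. destruct k; simpl; auto.
 rewrite SuccNat2Pos.id_succ. reflexivity.
Qed.
Lemma indec_unshift M n X k : admissible M n -> is_arc M X -> indec_in M (X :: nil) (Nat.iter k (unshift M) X).
Proof.
 intros Ha HX. split. { apply iter_unshift_arc with (n:=n); auto. }
 exists (Z.opp (Z.of_nat k) :: nil). simpl. left. destruct k; simpl; auto.
 rewrite SuccNat2Pos.id_succ. reflexivity.
Qed.

Lemma crt_sym A (r : relation A) : (forall x y, r x y -> r y x) ->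
  forall x y, clos_refl_trans A r x y -> clos_refl_trans A r y x.
Proof. intros Hs x y H; induction H. - apply rt_step; auto. - apply rt_refl. - eapply rt_trans; eauto. Qed.

Theorem proposition3p6 (n : nat) (M : R -> Prop) :
  (1 <= n)%nat -> admissible M n ->
  forall X : arc, is_arc M X -> hom_connected M (X :: nil).
Proof.
 intros _ Ha X HX.
 set (r := ext_step M (X :: nil)).
 assert (Hsym : forall x y, r x y -> r y x).
 { intros x y (h1 & h2 & h3). split; auto. split; auto. tauto. }
 assert (Hsh : forall k, clos_refl_trans arc r X (Nat.iter k (shift M) X)).
 { induction k. - apply rt_refl. - eapply rt_trans; [exact IHk|]. simpl.
   destruct (step_lemma M n (Nat.iter k (shift M) X) Ha (iter_shift_arc M n X k Ha HX)) as [e|e].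
   + rewrite e. apply rt_refl.
   + apply rt_step. split; [apply indec_shift with (n:=n); auto|].
     split; [apply (indec_shift M n X (S k)); auto|]. right. exact e. }
 assert (Hun : forall k, clos_refl_trans arc r X (Nat.iter k (unshift M) X)).
 { induction k. - apply rt_refl. - eapply rt_trans; [exact IHk|]. simpl.
   pose proof (unshift_arc M n _ Ha (iter_unshift_arc M n X k Ha HX)) as HA.
   pose proof (shift_unshift M n _ Ha (iter_unshift_arc M n X k Ha HX)) as HE.
   destruct (step_lemma M n _ Ha HA) as [e|e]; rewrite HE in e.
   + rewrite <- e at 1. apply rt_refl.
   + apply rt_step. split; [apply indec_unshift with (n:=n); auto|].
     split; [apply (indec_unshift M n X (S k)); auto|]. left. exact e. }
 assert (Hall : forall F, indec_in M (X :: nil) F -> clos_refl_trans arc r X F).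
 { intros F [HF [is Hin]].
   assert (exists i, F = shiftZ M i X) as [i ->].
   { induction is as [|i is IH]; simpl in Hin; [contradiction|].
     destruct Hin as [e|Hin]; [exists i; auto| apply IH; auto]. }
   destruct i; simpl; [apply rt_refl| apply Hsh | apply Hun]. }
 intros F F' HF HF'. apply clos_rt_rt1n.
 eapply rt_trans; [apply crt_sym; [exact Hsym|]; apply Hall; exact HF| apply Hall; exact HF'].
Qed.
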